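(* Let $G=(V,E)$ be a finite simple graph and let $\widehat G$ be its associated 2-colored complete graph. Then $G$ is a threshold graph if and only if $\dim \mathcal{A}(\widehat G)=0$.
   Context: A simple graph $G=(V,E)$ is threshold if there are real vertex weights $c(v)$, $v\in V$, such that every pair $\{u,v\}\in\binom{V}{2}$ satisfies $c(u)+c(v)>0$ if $\{u,v\}\in E$ and $c(u)+c(v)<0$ if $\{u,v\}\notin E$. The associated 2-colored graph $\widehat G$ is the complete graph $(V,\binom{V}{2})$ in which a pair is colored red if it is an edge of $G$ and blue otherwise. For a 2-colored graph $H=(V,F)$ (edges colored red/blue), the alternating cone $\mathcal{A}(H)\subseteq\mathbb{R}^F$ is the set of $x\in\mathbb{R}^F$ with $x(e)\ge 0$ for all $e\in F$ and, for every vertex $v$, the sum of $x(e)$ over red edges $e$ incident with $v$ equals the sum of $x(e)$ over blue edges $e$ incident with $v$. *)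

(* Defs.v *)
From HB Require Import structures.
From mathcomp Require Import all_boot all_order all_algebra.
From mathcomp Require Import reals.
Set Implicit Arguments.
Unset Strict Implicit.
Unset Printing Implicit Defensive.
Import Order.TTheory GRing.Theory Num.Theory.
Local Open Scope ring_scope.

Section Defs.
Variable V : finType.

Definition simple_graph (adj : rel V) : Prop :=
  symmetric adj /\ irreflexive adj.

Definition threshold (R : realType) (adj : rel V) : Prop :=
  exists c : V -> R, forall u v : V, u != v ->
    (adj u v -> 0 < c u + c v) /\ (~~ adj u v -> c u + c v < 0).

(* The pairs {u,v} in binom(V,2): the edge set of the complete graph on V. *)
Definition pair_pred : pred {set V} := fun A => #|A| == 2.
Notation pairs := {A : {set V} | pair_pred A}.

(* The 2-coloring of \hat G: a pair is red iff it is an edge of G. *)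
Definition red (adj : rel V) (e : pairs) : bool :=
  [forall u in val e, forall v in val e, (u != v) ==> adj u v].

Definition alt_cone (R : realType) (adj : rel V) : pred {ffun pairs -> R^o} :=
  fun x =>
    [forall e : pairs, 0 <= x e] &&
    [forall v, (\sum_(e : pairs | (v \in val e) && red adj e) x e)
               == \sum_(e : pairs | (v \in val e) && ~~ red adj e) x e].

(* Dimension of a subset S of a finite-dim vector space: the maximal number
   of linearly independent vectors in S (= dimension of its linear span). *)
Definition set_dim (R : fieldType) (vT : vectType R) (S : pred vT) (d : nat)
  : Prop :=
  (exists s : seq vT, [/\ size s = d, all S s & free s]) /\
  (forall s : seq vT, all S s -> free s -> (size s <= d)%N).

End Defs.

Arguments threshold {V} R adj.
Arguments alt_cone {V} R adj.

(* Main.v *)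
Require Import Defs.
From HB Require Import structures.
From mathcomp Require Import all_boot all_order all_algebra.
From mathcomp Require Import reals.
From mathcomp Require Import lra zify.
Set Implicit Arguments.
Unset Strict Implicit.
Unset Printing Implicit Defensive.
Import Order.TTheory GRing.Theory Num.Theory.
Local Open Scope ring_scope.

Lemma set_dim0 (K : fieldType) (vT : vectType K) (S : pred vT) :
  set_dim S 0 <-> (forall x, S x -> x = 0).
Proof.
split.
- case=> _ H x Sx; apply/eqP; apply/negPn/negP => x0.
  have := H [:: x]; rewrite /= Sx seq1_free x0 => /(_ erefl erefl).
  by [].
- move=> H; split; first by exists [::]; rewrite nil_free.
  case=> [//|y s] /= /andP[Sy _] fr.
  have := free_not0 fr (mem_head y s).
  by rewrite (H y Sy) eqxx.
Qed.

Section Main.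
Variables (R : realType) (V : finType) (adj : rel V).
Hypotheses (sym : symmetric adj) (irr : irreflexive adj).

Notation P := {A : {set V} | pair_pred A}.

Lemma pairP (e : P) : exists u w, u != w /\ val e = [set u; w].
Proof. by apply/cards2P; exact: (valP e). Qed.

Lemma red_pair (e : P) u w : u != w -> val e = [set u; w] -> red adj e = adj u w.
Proof.
move=> uw E; rewrite /red E; apply/idP/idP.
- move/forall_inP/(_ u (set21 u w))/forall_inP/(_ w (set22 u w)).
  by move/implyP/(_ uw).
- move=> h; apply/forall_inP=> x /set2P[]->; apply/forall_inP=> y /set2P[]->;
  by rewrite ?eqxx //= ?[adj w u]sym h implybT.
Qed.

Lemma adj_neq u v : adj u v -> u != v.
Proof. by apply: contraTneq => ->; rewrite irr. Qed.

Lemma sum_pair (e : P) u w (c : V -> R) : u != w -> val e = [set u; w] ->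
  \sum_(v in val e) c v = c u + c w.
Proof.
move=> uw E; rewrite E big_setU1 /= ?big_set1 //; last by rewrite inE.
Qed.

Lemma thr_cone (c : V -> R) :
  (forall u v : V, u != v ->
    (adj u v -> 0 < c u + c v) /\ (~~ adj u v -> c u + c v < 0)) ->
  forall x, alt_cone R adj x -> x = 0.
Proof.
move=> Hc x /andP[/forallP x0 /forallP bal].
pose s := fun e : P => if red adj e then 1 else -1 : R.
have H1 v : \sum_(e : P | v \in val e) s e * x e = 0.
  rewrite (bigID (red adj)) /=.
  rewrite (eq_bigr (fun e => x e)); last by move=> e /andP[_ h]; rewrite /s h mul1r.
  rewrite [X in _ + X](eq_bigr (fun e => - x e)); last first.
    by move=> e /andP[_ h]; rewrite /s (negbTE h) mulN1r.
  by rewrite sumrN (eqP (bal v)) subrr.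
have H2 : \sum_(e : P) (x e * (s e * \sum_(v in val e) c v)) = 0.
  transitivity (\sum_v c v * \sum_(e : P | v \in val e) s e * x e); last first.
    by rewrite big1 // => v _; rewrite H1 mulr0.
  under eq_bigr do rewrite mulrA mulr_sumr big_mkcond /=.
  rewrite exchange_big /=; apply: eq_bigr => v _.
  rewrite mulr_sumr [RHS]big_mkcond /=; apply: eq_bigr => e _.
  by case: (v \in val e); rewrite ?mulr0 // mulrC [x e * _]mulrC.
have pos e : 0 < s e * \sum_(v in val e) c v.
  have [u [w [uw E]]] := pairP e.
  rewrite (sum_pair _ uw E) /s (red_pair uw E).
  have [h1 h2] := Hc u w uw.
  by case: (boolP (adj u w)) => h; rewrite ?mul1r ?mulN1r ?oppr_gt0; auto.
apply/ffunP => e; rewrite ffunE.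
have nn : forall i : P, predT i -> 0 <= x i * (s i * \sum_(v in val i) c v).
  move=> i _; apply: mulr_ge0; [exact: x0 | exact: ltW].
have := psumr_eq0P nn H2 (i := e) erefl.
by move/eqP; rewrite mulf_eq0 (gt_eqF (pos e)) orbF => /eqP.
Qed.


Lemma mkp_pf (u w : V) : u != w -> pair_pred [set u; w].
Proof. by move=> h; rewrite /pair_pred cards2 h. Qed.

Definition mkp (u w : V) (h : u != w) : P := exist _ [set u; w] (mkp_pf h).

Definition delta (f : P) : {ffun P -> R^o} := [ffun e => ((e == f)%:R : R)].

Lemma sum_delta (Q : pred P) (f : P) :
  \sum_(e | Q e) (((e == f)%:R : R)) = (Q f)%:R.
Proof.
rewrite big_mkcond (bigD1 f) //= eqxx big1 ?addr0; first by case: (Q f).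
by move=> e /negbTE ->; case: (Q e).
Qed.

Lemma cone_NA4 : (forall x, alt_cone R adj x -> x = 0) ->
  forall a b c d, a != b -> b != c -> c != d -> d != a ->
  adj a b -> ~~ adj b c -> adj c d -> ~~ adj d a -> False.
Proof.
move=> H a b c d ab bc cd da hab hbc hcd hda.
have ac : a != c by apply: contraNneq hbc => <-; rewrite sym.
have bd : b != d by apply: contraNneq hda => <-; rewrite sym.
pose e1 := mkp ab; pose e2 := mkp bc; pose e3 := mkp cd; pose e4 := mkp da.
pose x : {ffun P -> R^o} := [ffun e => ((e == e1)%:R + (e == e2)%:R + (e == e3)%:R + (e == e4)%:R : R)].
have r1 : red adj e1 = true by rewrite (red_pair (u:=a) (w:=b)).
have r2 : red adj e2 = false by rewrite (red_pair (u:=b) (w:=c)) // (negbTE hbc).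
have r3 : red adj e3 = true by rewrite (red_pair (u:=c) (w:=d)).
have r4 : red adj e4 = false by rewrite (red_pair (u:=d) (w:=a)) // (negbTE hda).
have xc : alt_cone R adj x.
  apply/andP; split.
    by apply/forallP => e; rewrite !ffunE /= !addr_ge0 ?ler0n.
  apply/forallP => v; apply/eqP.
  have xE e : x e = ((e == e1)%:R + (e == e2)%:R + (e == e3)%:R + (e == e4)%:R : R).
    by rewrite ffunE.
  rewrite (eq_bigr _ (fun e _ => xE e)) [RHS](eq_bigr _ (fun e _ => xE e)).
  have S4 (Q : pred P) : \sum_(e | Q e) ((e == e1)%:R + (e == e2)%:R + (e == e3)%:R + (e == e4)%:R : R)
     = (Q e1)%:R + (Q e2)%:R + (Q e3)%:R + (Q e4)%:R.
    by rewrite !big_split !sum_delta.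
  rewrite !S4 r1 r2 r3 r4 !andbT !andbF.
  have -> : val e1 = [set a; b] by [].
  have -> : val e2 = [set b; c] by [].
  have -> : val e3 = [set c; d] by [].
  have -> : val e4 = [set d; a] by [].
  rewrite !in_set2.
  have nab := negbTE ab; have nbc := negbTE bc; have ncd := negbTE cd.
  have nda := negbTE da; have nac := negbTE ac; have nbd := negbTE bd.
  have nba : (b == a) = false by rewrite eq_sym.
  have ncb : (c == b) = false by rewrite eq_sym.
  have ndc : (d == c) = false by rewrite eq_sym.
  have nad : (a == d) = false by rewrite eq_sym.
  have nca : (c == a) = false by rewrite eq_sym.
  have ndb : (d == b) = false by rewrite eq_sym.
  have [->|va] := eqVneq v a; first by rewrite ?eqxx ?nab ?nac ?nad -!natrD.
  have [->|vb] := eqVneq v b; first by rewrite ?eqxx ?nba ?nbc ?nbd -!natrD.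
  have [->|vc] := eqVneq v c; first by rewrite ?eqxx ?nca ?ncb ?ncd -!natrD.
  have [_|vd] := eqVneq v d; first by rewrite -!natrD.
  by rewrite -!natrD.
have h0 : x e1 = 0 by rewrite (H x xc) ffunE.
move: h0; rewrite ffunE eqxx => /eqP; rewrite -!natrD pnatr_eq0.
by [].
Qed.


Section Build.
Hypothesis NA4 : forall a b c d, a != b -> b != c -> c != d -> d != a ->
  adj a b -> ~~ adj b c -> adj c d -> ~~ adj d a -> False.

Lemma key (S : {set V}) w0 : w0 \in S ->
  exists2 w, w \in S & exists bb : bool,
    forall v, v \in S -> v != w -> adj w v = bb.
Proof.
move=> w0S; pose deg v := #|[set y in S | adj v y]|.
case: (arg_maxnP deg w0S) => w wS wmax.
have [dom|] := boolP [forall v in S, (v != w) ==> adj w v].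
  exists w => //; exists true => v vS vw.
  by move/forall_inP: dom => /(_ v vS)/implyP/(_ vw).
rewrite negb_forall_in => /exists_inP[a aS]; rewrite negb_imply => /andP[aw nwa].
exists a => //; exists false => b bS ba; apply/negP => ab.
have bw : b != w by apply: contraNneq nwa => <-; rewrite sym.
have ab' : a != b by exact: adj_neq.
have wa : w != a by rewrite eq_sym.
case: (boolP (adj w b)) => wb.
  (* deg b > deg w *)
  set Nw := [set y in S | adj w y]; set Nb := [set y in S | adj b y].
  have sub : a |: (Nw :\ b) \subset Nb :\ w.
    apply/subsetP => y; rewrite !inE => /orP[/eqP->|/and3P[yb yS wy]].
      by rewrite aw aS sym ab.
    rewrite yS eq_sym (adj_neq wy) /=.
    apply/negPn/negP => nby.
    apply: (NA4 ab' _ _ wa ab nby _ nwa).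
    - by rewrite eq_sym.
    - by rewrite eq_sym adj_neq.
    - by rewrite sym.
  have aN : a \notin Nw :\ b by rewrite !inE (negbTE nwa) !andbF.
  have bN : b \in Nw by rewrite inE bS wb.
  have wN : w \in Nb by rewrite inE [adj b w]sym wb andbT; exact: wS.
  have h1 := subset_leq_card sub; rewrite cardsU1 aN in h1.
  have h2 := cardsD1 b Nw; rewrite bN in h2.
  have h3 := cardsD1 w Nb; rewrite wN in h3.
  have h4 : (#|Nb| <= #|Nw|)%N := wmax b bS.
  rewrite h2 h3 ltnS in h4.
  by have := leq_trans h1 h4; rewrite add1n ltnn.
have sub : b |: [set y in S | adj w y] \subset [set y in S | adj a y].
  apply/subsetP => y; rewrite !inE => /orP[/eqP->|/andP[yS wy]].
    by rewrite bS ab.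
  rewrite yS; apply/negPn/negP => nay.
  apply: (NA4 (adj_neq wy) _ ab' bw wy _ ab _).
  - by apply: contraNneq nwa => <-.
  - by rewrite sym.
  - by rewrite sym.
have := subset_leq_card sub.
rewrite cardsU1 !inE (negbTE wb) andbF /=.
have h4 : (#|[set y in S | adj a y]| <= #|[set y in S | adj w y]|)%N := wmax a aS.
move=> h; have := leq_trans h h4; by rewrite add1n ltnn.
Qed.

Lemma build n : forall S : {set V}, #|S| = n -> exists c : V -> R,
  forall u v, u \in S -> v \in S -> u != v ->
    (adj u v -> 0 < c u + c v) /\ (~~ adj u v -> c u + c v < 0).
Proof.
elim: n => [|n IH] S hS.
  by exists (fun=> 0) => u v; rewrite (cards0_eq hS) inE.
have [w0 w0S] : exists w0, w0 \in S by apply/set0Pn; rewrite -card_gt0 hS.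
have [w wS [bb Hw]] := key w0S.
have [c' Hc'] : exists c' : V -> R, forall u v, u \in S :\ w -> v \in S :\ w -> u != v ->
    (adj u v -> 0 < c' u + c' v) /\ (~~ adj u v -> c' u + c' v < 0).
  by apply: IH; move: hS; rewrite (cardsD1 w) wS add1n => -[].
pose M := 1 + \sum_v `|c' v|.
have Mgt v : - M < c' v < M.
  rewrite -ltr_norml /M (bigD1 v) //=.
  have : 0 <= \sum_(i | i != v) `|c' i| by apply: sumr_ge0 => i _.
  lra.
pose c := fun v => if v == w then (if bb then M else - M) else c' v.
have Hw' v : v \in S -> v != w ->
    (adj w v -> 0 < c w + c v) /\ (~~ adj w v -> c w + c v < 0).
  move=> vS vw; rewrite /c eqxx (negbTE vw) (Hw v vS vw).
  have := Mgt v; case: (bb) => /andP[h1 h2]; split=> //= _; lra.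
exists c => u v uS vS uv.
have [uw|uw] := eqVneq u w.
  by subst u; apply: Hw'; rewrite // eq_sym.
have [vw|vw] := eqVneq v w.
  subst v; rewrite addrC sym; exact: Hw'.
rewrite /c (negbTE uw) (negbTE vw); apply: Hc' => //; rewrite !inE ?uw ?vw //.
Qed.
End Build.

End Main.

Theorem theorem2p1 (R : realType) (V : finType) (adj : rel V) :
  simple_graph adj ->
  (threshold R adj <-> set_dim (alt_cone R adj) 0).
Proof.
move=> [sym irr]; rewrite set_dim0; split.
- case=> c Hc x xc; exact: (thr_cone sym Hc xc).
- move=> H.
  have NA4 := cone_NA4 sym H.
  have [c Hc] := @build R V adj sym irr NA4 _ [set: V] erefl.
  by exists c => u v uv; apply: Hc; rewrite ?inE.
Qed.
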